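(* Let $$(W)\qquad w_{,t}=(w+1)\Bigl(w_2\Bigl(\frac{1}{w_1}+1\Bigr)w-w\Bigl(\frac{1}{w_{-1}}+1\Bigr)w_{-2}+w_1-w_{-1}\Bigr).$$ In each of the following cases, if $u(n,t)$ is a solution of the given lattice equation, then $w(n,t)$ defined by the given formula is a solution of $(W)$: (a) $\tfrac12u_{,t}=\frac{1}{\frac{2}{u_2-u}+\frac{1}{u-u_1}+\frac{1}{u-u_{-1}}}-\frac{1}{\frac{2}{u_{-2}-u}+\frac{1}{u-u_1}+\frac{1}{u-u_{-1}}}$, with $w=\frac{1}{2\frac{(u_3-u_2)(u_1-u)}{(u_3-u_1)(u_2-u)}-1}$; (c) $\tfrac14u_{,t}=\frac{1}{\frac{(u_2-u+2)(u_1-u-1)(u_{-1}-u-1)}{(u_2-u-2)(u_1-u+1)(u_{-1}-u+1)}-1}+\frac{1}{\frac{(u_{-2}-u-2)(u_1-u+1)(u_{-1}-u+1)}{(u_{-2}-u+2)(u_1-u-1)(u_{-1}-u-1)}-1}$, with $w=\frac{(u_3-2u_2+u_1)(u_2-2u_1+u)}{2-2(u_2-u_1)^2-(u_3-2u_2+u_1)(u_2-2u_1+u)}$; (d) $u_{,t}=\frac{u-u_{-1}}{u_1-u_{-1}+\frac{u-u_1}{u-u_2}}-\frac{u-u_1}{u_1-u_{-1}+\frac{u-u_{-1}}{u-u_{-2}}}$, with $w=-\frac{1}{1+\frac{u_2-u_1}{(u_3-u_1)(u_2-u)}}$; (f) $u_{,t}=u\frac{(1-\frac{u}{u_2})(1-\frac{u_{-1}}{u})}{1-\frac{u}{u_1}}+u\frac{(1-\frac{u_{-2}}{u})(1-\frac{u}{u_1})}{1-\frac{u_{-1}}{u}}$,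 with $w=\frac{u}{u_1}-1$; (h) $u_{,t}=u\frac{(1-\frac{u}{u_2})(1+\frac{u_{-1}}{u})}{1+\frac{u}{u_1}}+u\frac{(1-\frac{u_{-2}}{u})(1+\frac{u}{u_1})}{1+\frac{u_{-1}}{u}}$, with $w=-\frac{u}{u_1}-1$; (i) for a constant $\gamma\neq0$ with $\gamma^2\neq-1$: $-\frac{1}{1+\gamma^2}u_{,t}=\frac{(u-\gamma u_{-1})(u-\gamma u_1)(u-\gamma^{-2}u_2)}{(\gamma u_{-1}-u)(\gamma u_1-u_2)-(\gamma u-u_1)(u_{-1}-\gamma u_2)}-\frac{(u-\gamma^{-1}u_{-1})(u-\gamma^{-1}u_1)(u-\gamma^2u_{-2})}{(\gamma u_{-2}-u_{-1})(\gamma u-u_1)-(\gamma u_{-1}-u)(u_{-2}-\gamma u_1)}$, with $w=\frac{\gamma(u-(\gamma^{-1}+\gamma)u_1+u_2)(u_1-(\gamma^{-1}+\gamma)u_2+u_3)}{(\gamma u-u_1)(\gamma u_2-u_3)-(\gamma u_1-u_2)(u-\gamma u_3)}$.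
   Context: Here $u=u(n,t)$, $u_m=u(n+m,t)$, $w=w(n,t)$, $w_m=w(n+m,t)$ for $n\in\mathbb Z$, and ${,t}$ denotes $\partial/\partial t$. *)

(* Defs.v *)
From Stdlib Require Import Reals ZArith.
From Coquelicot Require Import Coquelicot.
Open Scope R_scope.

(* A "snapshot" of a lattice field at a fixed time: v : Z -> R.
   sh v n k = v_{n+k}  (i.e. u_k in the paper's notation, at site n). *)
Definition sh (v : Z -> R) (n k : Z) : R := v (n + k)%Z.

Definition solves (c : R) (F : (Z -> R) -> Z -> R) (u : Z -> R -> R) : Prop :=
  forall (n : Z) (t : R), exists d : R,
    is_derive (fun s => u n s) t d /\ c * d = F (fun m => u m t) n.

Definition W_rhs (w : Z -> R) (n : Z) : R :=
  let w0 := sh w n 0 in let w1 := sh w n 1 in let w2 := sh w n 2 in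
  let wm1 := sh w n (-1) in let wm2 := sh w n (-2) in
  (w0 + 1) * (w2 * (1 / w1 + 1) * w0 - w0 * (1 / wm1 + 1) * wm2 + w1 - wm1).

(* [transforms c F ND G]: every solution u of  c u_t = F(u)  for which all the
   denominators in F and in the formula G are nonzero (predicate ND, imposed at
   every site and time), and for which the resulting w = G(u) never vanishes
   (so that the denominators w_{1}, w_{-1} of (W) are nonzero), yields
   w(n,t) = G(u(.,t))(n) solving (W). *)
Definition transforms (c : R) (F : (Z -> R) -> Z -> R)
    (ND : (Z -> R) -> Z -> Prop) (G : (Z -> R) -> Z -> R) : Prop :=
  forall u : Z -> R -> R,
    solves c F u ->
    (forall n t, ND (fun m => u m t) n) ->
    (forall n t, G (fun m => u m t) n <> 0) ->
    solves 1 W_rhs (fun n t => G (fun m => u m t) n).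

Definition Fa (v : Z -> R) (n : Z) : R :=
  let u := sh v n 0 in let u1 := sh v n 1 in let u2 := sh v n 2 in
  let um1 := sh v n (-1) in let um2 := sh v n (-2) in
  1 / (2 / (u2 - u) + 1 / (u - u1) + 1 / (u - um1))
  - 1 / (2 / (um2 - u) + 1 / (u - u1) + 1 / (u - um1)).
Definition Ga (v : Z -> R) (n : Z) : R :=
  let u := sh v n 0 in let u1 := sh v n 1 in let u2 := sh v n 2 in
  let u3 := sh v n 3 in
  1 / (2 * (((u3 - u2) * (u1 - u)) / ((u3 - u1) * (u2 - u))) - 1).
Definition NDa (v : Z -> R) (n : Z) : Prop :=
  let u := sh v n 0 in let u1 := sh v n 1 in let u2 := sh v n 2 in
  let u3 := sh v n 3 in let um1 := sh v n (-1) in let um2 := sh v n (-2) in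
  u2 - u <> 0 /\ u - u1 <> 0 /\ u - um1 <> 0 /\ um2 - u <> 0 /\
  2 / (u2 - u) + 1 / (u - u1) + 1 / (u - um1) <> 0 /\
  2 / (um2 - u) + 1 / (u - u1) + 1 / (u - um1) <> 0 /\
  u3 - u1 <> 0 /\
  2 * (((u3 - u2) * (u1 - u)) / ((u3 - u1) * (u2 - u))) - 1 <> 0.

Definition Fc (v : Z -> R) (n : Z) : R :=
  let u := sh v n 0 in let u1 := sh v n 1 in let u2 := sh v n 2 in
  let um1 := sh v n (-1) in let um2 := sh v n (-2) in
  1 / ((u2 - u + 2) * (u1 - u - 1) * (um1 - u - 1)
        / ((u2 - u - 2) * (u1 - u + 1) * (um1 - u + 1)) - 1)
  + 1 / ((um2 - u - 2) * (u1 - u + 1) * (um1 - u + 1)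
        / ((um2 - u + 2) * (u1 - u - 1) * (um1 - u - 1)) - 1).
Definition Gc (v : Z -> R) (n : Z) : R :=
  let u := sh v n 0 in let u1 := sh v n 1 in let u2 := sh v n 2 in
  let u3 := sh v n 3 in
  (u3 - 2 * u2 + u1) * (u2 - 2 * u1 + u)
  / (2 - 2 * (u2 - u1) ^ 2 - (u3 - 2 * u2 + u1) * (u2 - 2 * u1 + u)).
Definition NDc (v : Z -> R) (n : Z) : Prop :=
  let u := sh v n 0 in let u1 := sh v n 1 in let u2 := sh v n 2 in
  let u3 := sh v n 3 in let um1 := sh v n (-1) in let um2 := sh v n (-2) in
  u2 - u - 2 <> 0 /\ u1 - u + 1 <> 0 /\ um1 - u + 1 <> 0 /\
  um2 - u + 2 <> 0 /\ u1 - u - 1 <> 0 /\ um1 - u - 1 <> 0 /\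
  (u2 - u + 2) * (u1 - u - 1) * (um1 - u - 1)
    / ((u2 - u - 2) * (u1 - u + 1) * (um1 - u + 1)) - 1 <> 0 /\
  (um2 - u - 2) * (u1 - u + 1) * (um1 - u + 1)
    / ((um2 - u + 2) * (u1 - u - 1) * (um1 - u - 1)) - 1 <> 0 /\
  2 - 2 * (u2 - u1) ^ 2 - (u3 - 2 * u2 + u1) * (u2 - 2 * u1 + u) <> 0.

Definition Fd (v : Z -> R) (n : Z) : R :=
  let u := sh v n 0 in let u1 := sh v n 1 in let u2 := sh v n 2 in
  let um1 := sh v n (-1) in let um2 := sh v n (-2) in
  (u - um1) / (u1 - um1 + (u - u1) / (u - u2))
  - (u - u1) / (u1 - um1 + (u - um1) / (u - um2)).
Definition Gd (v : Z -> R) (n : Z) : R :=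
  let u := sh v n 0 in let u1 := sh v n 1 in let u2 := sh v n 2 in
  let u3 := sh v n 3 in
  - (1 / (1 + (u2 - u1) / ((u3 - u1) * (u2 - u)))).
Definition NDd (v : Z -> R) (n : Z) : Prop :=
  let u := sh v n 0 in let u1 := sh v n 1 in let u2 := sh v n 2 in
  let u3 := sh v n 3 in let um1 := sh v n (-1) in let um2 := sh v n (-2) in
  u - u2 <> 0 /\ u - um2 <> 0 /\
  u1 - um1 + (u - u1) / (u - u2) <> 0 /\
  u1 - um1 + (u - um1) / (u - um2) <> 0 /\
  u3 - u1 <> 0 /\
  1 + (u2 - u1) / ((u3 - u1) * (u2 - u)) <> 0.

Definition Ff (v : Z -> R) (n : Z) : R :=
  let u := sh v n 0 in let u1 := sh v n 1 in let u2 := sh v n 2 in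
  let um1 := sh v n (-1) in let um2 := sh v n (-2) in
  u * ((1 - u / u2) * (1 - um1 / u)) / (1 - u / u1)
  + u * ((1 - um2 / u) * (1 - u / u1)) / (1 - um1 / u).
Definition Gf (v : Z -> R) (n : Z) : R :=
  let u := sh v n 0 in let u1 := sh v n 1 in u / u1 - 1.
Definition NDf (v : Z -> R) (n : Z) : Prop :=
  let u := sh v n 0 in let u1 := sh v n 1 in let um1 := sh v n (-1) in
  u <> 0 /\ 1 - u / u1 <> 0 /\ 1 - um1 / u <> 0.

Definition Fh (v : Z -> R) (n : Z) : R :=
  let u := sh v n 0 in let u1 := sh v n 1 in let u2 := sh v n 2 in
  let um1 := sh v n (-1) in let um2 := sh v n (-2) in
  u * ((1 - u / u2) * (1 + um1 / u)) / (1 + u / u1)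
  + u * ((1 - um2 / u) * (1 + u / u1)) / (1 + um1 / u).
Definition Gh (v : Z -> R) (n : Z) : R :=
  let u := sh v n 0 in let u1 := sh v n 1 in - (u / u1) - 1.
Definition NDh (v : Z -> R) (n : Z) : Prop :=
  let u := sh v n 0 in let u1 := sh v n 1 in let um1 := sh v n (-1) in
  u <> 0 /\ 1 + u / u1 <> 0 /\ 1 + um1 / u <> 0.

Definition Fi (g : R) (v : Z -> R) (n : Z) : R :=
  let u := sh v n 0 in let u1 := sh v n 1 in let u2 := sh v n 2 in
  let um1 := sh v n (-1) in let um2 := sh v n (-2) in
  (u - g * um1) * (u - g * u1) * (u - / (g ^ 2) * u2)
    / ((g * um1 - u) * (g * u1 - u2) - (g * u - u1) * (um1 - g * u2))
  - (u - / g * um1) * (u - / g * u1) * (u - g ^ 2 * um2)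
    / ((g * um2 - um1) * (g * u - u1) - (g * um1 - u) * (um2 - g * u1)).
Definition Gi (g : R) (v : Z -> R) (n : Z) : R :=
  let u := sh v n 0 in let u1 := sh v n 1 in let u2 := sh v n 2 in
  let u3 := sh v n 3 in
  g * (u - (/ g + g) * u1 + u2) * (u1 - (/ g + g) * u2 + u3)
  / ((g * u - u1) * (g * u2 - u3) - (g * u1 - u2) * (u - g * u3)).
Definition NDi (g : R) (v : Z -> R) (n : Z) : Prop :=
  let u := sh v n 0 in let u1 := sh v n 1 in let u2 := sh v n 2 in
  let u3 := sh v n 3 in let um1 := sh v n (-1) in let um2 := sh v n (-2) in
  (g * um1 - u) * (g * u1 - u2) - (g * u - u1) * (um1 - g * u2) <> 0 /\
  (g * um2 - um1) * (g * u - u1) - (g * um1 - u) * (um2 - g * u1) <> 0 /\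
  (g * u - u1) * (g * u2 - u3) - (g * u1 - u2) * (u - g * u3) <> 0.

(* Main.v *)
Require Import Defs.
From Stdlib Require Import Reals ZArith Lra.
From Coquelicot Require Import Coquelicot.
Open Scope R_scope.


Ltac is_lit a := lazymatch a with Z0 => idtac | Zpos _ => idtac | Zneg _ => idtac end.
Ltac normZ := repeat match goal with
 | |- context [(?n + ?a + ?b)%Z] => rewrite <- (Z.add_assoc n a b)
 end; repeat match goal with |- context [(?a + ?b)%Z] => is_lit a; is_lit b;
   let c := eval compute in (a+b)%Z in change (a+b)%Z with c end.

Ltac nz_simple := idtac; match goal with
  | |- ?a * ?b <> 0 => apply Rmult_integral_contrapositive_currified; nz_simple
  | |- _ <> 0 => assumption
  | |- ?p <> 0 => match goal with H : ?q <> 0 |- _ =>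
        let Z := fresh in intro Z; apply H; clear - Z; lra end
  end.
Ltac solve_nz0 :=
 idtac; match goal with
  | |- ?p <> 0 => assumption
  | |- ?a * ?b <> 0 => apply Rmult_integral_contrapositive_currified; solve_nz0
  | |- ?p <> 0 => match goal with H : ?e <> 0 |- _ =>
        let Z := fresh in intro Z; apply H; field_simplify_eq; [clear - Z; lra | ..]; repeat split; try nz_simple; fail end
  end.
Ltac solve_nz := solve [solve_nz0].

Lemma divc (c d e : R) : c <> 0 -> c * d = e -> d = e / c.
Proof. intros Hc H; rewrite <- H; field; exact Hc. Qed.

Ltac setvars u n t :=
  set (xm4 := u (n + -4)%Z t) in *;
  set (xm3 := u (n + -3)%Z t) in *; set (xm2 := u (n + -2)%Z t) in *; set (xm1 := u (n + -1)%Z t) in *;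
  set (x0 := u (n + 0)%Z t) in *; set (x1 := u (n + 1)%Z t) in *; set (x2 := u (n + 2)%Z t) in *;
  set (x3 := u (n + 3)%Z t) in *; set (x4 := u (n + 4)%Z t) in *; set (x5 := u (n + 5)%Z t) in *;
  set (x6 := u (n + 6)%Z t) in *; set (x7 := u (n + 7)%Z t) in *; set (x8 := u (n + 8)%Z t) in *.

Ltac deriv_side := auto_derive; [ repeat split; try (eexists; eassumption); solve_nz | try reflexivity .. ].

Ltac drive c Fn Gn NDn hc :=
  intros u Hs Hnd Hnz n t;
  assert (Hc : c <> 0) by hc;
  destruct (Hs (n+0)%Z t) as [d0 [D0 E0]];
  destruct (Hs (n+1)%Z t) as [d1 [D1 E1]];
  destruct (Hs (n+2)%Z t) as [d2 [D2 E2]];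
  destruct (Hs (n+3)%Z t) as [d3 [D3 E3]];
  assert (Q0 : Derive (fun x : R => u (n+0)%Z x) t = d0) by (apply is_derive_unique; exact D0);
  assert (Q1 : Derive (fun x : R => u (n+1)%Z x) t = d1) by (apply is_derive_unique; exact D1);
  assert (Q2 : Derive (fun x : R => u (n+2)%Z x) t = d2) by (apply is_derive_unique; exact D2);
  assert (Q3 : Derive (fun x : R => u (n+3)%Z x) t = d3) by (apply is_derive_unique; exact D3);
  apply (divc _ _ _ Hc) in E0; apply (divc _ _ _ Hc) in E1;
  apply (divc _ _ _ Hc) in E2; apply (divc _ _ _ Hc) in E3;
  revert E0 E1 E2 E3;
  generalize (Hnz (n + -2)%Z t) (Hnz (n + -1)%Z t) (Hnz (n+0)%Z t) (Hnz (n+1)%Z t) (Hnz (n+2)%Z t);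
  generalize (Hnd (n + -2)%Z t) (Hnd (n + -1)%Z t) (Hnd (n+0)%Z t) (Hnd (n+1)%Z t) (Hnd (n+2)%Z t)
   (Hnd (n+3)%Z t) (Hnd (n+4)%Z t) (Hnd (n+5)%Z t);
  cbv beta zeta delta [W_rhs Fn Gn NDn sh];
  normZ; intros;
  repeat match goal with H : _ /\ _ |- _ => destruct H end;
  eexists; split; [ deriv_side | ];
  rewrite ?Q0, ?Q1, ?Q2, ?Q3; clear Q0 Q1 Q2 Q3 D0 D1 D2 D3; subst d0 d1 d2 d3;
  clear Hs Hnd Hnz;
  setvars u n t.

Lemma ex_shift (a t : R) : exists y, a = y + t.
Proof. exists (a - t); ring. Qed.
Lemma shA (a b t : R) : (a + t) + - (b + t) = a + - b. Proof. ring. Qed.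
Lemma shB (a t : R) : (a + t) + - t = a. Proof. ring. Qed.
Lemma shC (b t : R) : t + - (b + t) = - b. Proof. ring. Qed.
Lemma shD (t : R) : t + - t = 0. Proof. ring. Qed.

Ltac sh1 y x0 := let z := fresh "y" in destruct (ex_shift y x0) as [z ->].
Ltac shnorm := unfold Rminus in *; rewrite ?shA, ?shB, ?shC, ?shD in *.
Lemma sd2 (a b c : R) : a + - (2 * b) + c = (a + - b) + - (b + - c). Proof. ring. Qed.
Lemma prod_nz_l (a b : R) : a * b <> 0 -> a <> 0.
Proof. intros H Ha; apply H; rewrite Ha; ring. Qed.
Lemma prod_nz_r (a b : R) : a * b <> 0 -> b <> 0.
Proof. intros H Hb; apply H; rewrite Hb; ring. Qed.
Lemma div_nz_l (a b : R) : a / b <> 0 -> a <> 0.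
Proof. intros H Ha; apply H; rewrite Ha; unfold Rdiv; ring. Qed.
Lemma div_nz_r (a b : R) : a / b <> 0 -> b <> 0.
Proof. intros H Hb; apply H; rewrite Hb; unfold Rdiv; rewrite Rinv_0; ring. Qed.
Ltac saturate := repeat match goal with
 | H : ?a * ?b <> 0 |- _ => pose proof (prod_nz_l _ _ H); pose proof (prod_nz_r _ _ H); clear H
 | H : ?a / ?b <> 0 |- _ => pose proof (div_nz_l _ _ H); pose proof (div_nz_r _ _ H); clear H
 end.


Definition iD (g a b c d : R) := (g * a - b) * (g * c - d) - (g * b - c) * (a - g * d).
Definition iA (g a b c : R) := a - (/ g + g) * b + c.
Definition iN (g a b c d : R) := g * iA g a b c * iA g b c d.
Definition iP (g m1 u u1 u2 : R) := (u - g * m1) * (u - g * u1) * (u - / (g ^ 2) * u2).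
Definition iQ (g m2 m1 u u1 : R) := (u - / g * m1) * (u - / g * u1) * (u - g ^ 2 * m2).
Definition iF (g m2 m1 u u1 u2 : R) := iP g m1 u u1 u2 / iD g m1 u u1 u2 - iQ g m2 m1 u u1 / iD g m2 m1 u u1.
Definition ic (g : R) := - (1 / (1 + g ^ 2)).
Definition idN (g a b c d da db dc dd : R) :=
  g * ((da - (/ g + g) * db + dc) * iA g b c d + iA g a b c * (db - (/ g + g) * dc + dd)).
Definition idD (g a b c d da db dc dd : R) :=
  (g*da-db)*(g*c-d)+(g*a-b)*(g*dc-dd)-(g*db-dc)*(a-g*d)-(g*b-c)*(da-g*dd).
Definition iC (g a b c d da db dc dd : R) :=
  idN g a b c d da db dc dd * iD g a b c d - iN g a b c d * idD g a b c d da db dc dd.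
Definition iqm2 (g xm2 xm1 x0 x1 x2 x3 x4 x5 : R) : R :=
  x0*x1^3*g^8 + (2)*x0*x1^3*g^6 + x0*x1^3*g^4 + (-2)*x0*x1^2*x2*g^9 + (-6)*x0*x1^2*x2*g^7 + (-6)*x0*x1^2*x2*g^5 + (-2)*x0*x1^2*x2*g^3 + x0*x1^2*x3*g^8 + (2)*x0*x1^2*x3*g^6 + x0*x1^2*x3*g^4 + x0*x1*x2^2*g^10 + (5)*x0*x1*x2^2*g^8 + (8)*x0*x1*x2^2*g^6 + (5)*x0*x1*x2^2*g^4 + x0*x1*x2^2*g^2 + -(x0*x1*x2*x3*g^9) + (-3)*x0*x1*x2*x3*g^7 + (-3)*x0*x1*x2*x3*g^5 + -(x0*x1*x2*x3*g^3) + -(x0*x2^3*g^9) + (-3)*x0*x2^3*g^7 + (-3)*x0*x2^3*g^5 + -(x0*x2^3*g^3) + x0*x2^2*x3*g^8 + (2)*x0*x2^2*x3*g^6 + x0*x2^2*x3*g^4 + -(x1^4*g^7) + (-2)*x1^4*g^5 + -(x1^4*g^3) + (2)*x1^3*x2*g^8 + (6)*x1^3*x2*g^6 + (6)*x1^3*x2*g^4 + (2)*x1^3*x2*g^2 + -(x1^3*x3*g^7) + (-2)*x1^3*x3*g^5 + -(x1^3*x3*g^3) + -(x1^2*x2^2*g^9) + (-5)*x1^2*x2^2*g^7 + (-8)*x1^2*x2^2*g^5 + (-5)*x1^2*x2^2*g^3 + -(x1^2*x2^2*g) + x1^2*x2*x3*g^8 + (3)*x1^2*x2*x3*g^6 +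 (3)*x1^2*x2*x3*g^4 + x1^2*x2*x3*g^2 + x1*x2^3*g^8 + (3)*x1*x2^3*g^6 + (3)*x1*x2^3*g^4 + x1*x2^3*g^2 + -(x1*x2^2*x3*g^7) + (-2)*x1*x2^2*x3*g^5 + -(x1*x2^2*x3*g^3).
Definition iqm1 (g xm2 xm1 x0 x1 x2 x3 x4 x5 : R) : R :=
  -(x0*x1^3*g^6) + -(x0*x1^3*g^4) + (3)*x0*x1^2*x2*g^7 + (6)*x0*x1^2*x2*g^5 + (3)*x0*x1^2*x2*g^3 + -(x0*x1^2*x3*g^8) + (-3)*x0*x1^2*x3*g^6 + (-2)*x0*x1^2*x3*g^4 + -(x0*x1*x2^2*g^8) + (-6)*x0*x1*x2^2*g^6 + (-8)*x0*x1*x2^2*g^4 + (-3)*x0*x1*x2^2*g^2 + (3)*x0*x1*x2*x3*g^7 + (6)*x0*x1*x2*x3*g^5 + (3)*x0*x1*x2*x3*g^3 + x0*x2^3*g^7 + (3)*x0*x2^3*g^5 + (3)*x0*x2^3*g^3 + x0*x2^3*g + (-2)*x0*x2^2*x3*g^6 + (-3)*x0*x2^2*x3*g^4 + -(x0*x2^2*x3*g^2) + -(x1^3*x2*g^8) + (-3)*x1^3*x2*g^6 + (-2)*x1^3*x2*g^4 + x1^3*x3*g^9 + (3)*x1^3*x3*g^7 + (3)*x1^3*x3*g^5 + x1^3*x3*g^3 + (3)*x1^2*x2^2*g^7 + (6)*x1^2*x2^2*g^5 + (3)*x1^2*x2^2*g^3 + (-3)*x1^2*x2*x3*g^8 + (-8)*x1^2*x2*x3*g^6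 + (-6)*x1^2*x2*x3*g^4 + -(x1^2*x2*x3*g^2) + (-2)*x1*x2^3*g^6 + (-3)*x1*x2^3*g^4 + -(x1*x2^3*g^2) + (3)*x1*x2^2*x3*g^7 + (6)*x1*x2^2*x3*g^5 + (3)*x1*x2^2*x3*g^3 + -(x2^3*x3*g^6) + -(x2^3*x3*g^4).
Definition iq0 (g xm2 xm1 x0 x1 x2 x3 x4 x5 : R) : R :=
  -(x0*x1^3*g^8) + (-2)*x0*x1^3*g^6 + -(x0*x1^3*g^4) + (2)*x0*x1^2*x2*g^9 + (5)*x0*x1^2*x2*g^7 + (4)*x0*x1^2*x2*g^5 + x0*x1^2*x2*g^3 + -(x0*x1^2*x3*g^8) + -(x0*x1^2*x3*g^6) + x0*x1^2*x3*g^4 + x0*x1^2*x3*g^2 + -(x0*x1*x2^2*g^10) + (-4)*x0*x1*x2^2*g^8 + (-5)*x0*x1*x2^2*g^6 + (-2)*x0*x1*x2^2*g^4 + x0*x1*x2*x3*g^9 + (2)*x0*x1*x2*x3*g^7 + (-2)*x0*x1*x2*x3*g^3 + -(x0*x1*x2*x3*g) + x0*x2^3*g^9 + (2)*x0*x2^3*g^7 + x0*x2^3*g^5 + -(x0*x2^2*x3*g^8) + -(x0*x2^2*x3*g^6) + x0*x2^2*x3*g^4 + x0*x2^2*x3*g^2 + x1^4*g^7 + (2)*x1^4*g^5 + x1^4*g^3 + -(x1^3*x2*g^8) + (-3)*x1^3*x2*g^6 + (-3)*x1^3*x2*g^4 + -(x1^3*x2*g^2) + -(x1^3*x3*g^5)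 + (-2)*x1^3*x3*g^3 + -(x1^3*x3*g) + (2)*x1^2*x2*x3*g^6 + (5)*x1^2*x2*x3*g^4 + (4)*x1^2*x2*x3*g^2 + x1^2*x2*x3 + x1*x2^3*g^8 + (3)*x1*x2^3*g^6 + (3)*x1*x2^3*g^4 + x1*x2^3*g^2 + -(x1*x2^2*x3*g^7) + (-4)*x1*x2^2*x3*g^5 + (-5)*x1*x2^2*x3*g^3 + (-2)*x1*x2^2*x3*g + -(x2^4*g^7) + (-2)*x2^4*g^5 + -(x2^4*g^3) + x2^3*x3*g^6 + (2)*x2^3*x3*g^4 + x2^3*x3*g^2.
Definition iq1 (g xm2 xm1 x0 x1 x2 x3 x4 x5 : R) : R :=
  x0*x1^3*g^6 + x0*x1^3*g^4 + (-3)*x0*x1^2*x2*g^7 + (-6)*x0*x1^2*x2*g^5 + (-3)*x0*x1^2*x2*g^3 + x0*x1^2*x3*g^8 + (3)*x0*x1^2*x3*g^6 + (2)*x0*x1^2*x3*g^4 + x0*x1*x2^2*g^8 + (6)*x0*x1*x2^2*g^6 + (8)*x0*x1*x2^2*g^4 + (3)*x0*x1*x2^2*g^2 + (-3)*x0*x1*x2*x3*g^7 + (-6)*x0*x1*x2*x3*g^5 + (-3)*x0*x1*x2*x3*g^3 + -(x0*x2^3*g^7) + (-3)*x0*x2^3*g^5 + (-3)*x0*x2^3*g^3 + -(x0*x2^3*g) + (2)*x0*x2^2*x3*g^6 + (3)*x0*x2^2*x3*g^4 + x0*x2^2*x3*g^2 + x1^3*x2*g^8 + (3)*x1^3*x2*g^6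 + (2)*x1^3*x2*g^4 + -(x1^3*x3*g^9) + (-3)*x1^3*x3*g^7 + (-3)*x1^3*x3*g^5 + -(x1^3*x3*g^3) + (-3)*x1^2*x2^2*g^7 + (-6)*x1^2*x2^2*g^5 + (-3)*x1^2*x2^2*g^3 + (3)*x1^2*x2*x3*g^8 + (8)*x1^2*x2*x3*g^6 + (6)*x1^2*x2*x3*g^4 + x1^2*x2*x3*g^2 + (2)*x1*x2^3*g^6 + (3)*x1*x2^3*g^4 + x1*x2^3*g^2 + (-3)*x1*x2^2*x3*g^7 + (-6)*x1*x2^2*x3*g^5 + (-3)*x1*x2^2*x3*g^3 + x2^3*x3*g^6 + x2^3*x3*g^4.
Definition iq2 (g xm2 xm1 x0 x1 x2 x3 x4 x5 : R) : R :=
  x0*x1^2*x2*g^7 + (2)*x0*x1^2*x2*g^5 + x0*x1^2*x2*g^3 + -(x0*x1^2*x3*g^6) + (-2)*x0*x1^2*x3*g^4 + -(x0*x1^2*x3*g^2) + -(x0*x1*x2^2*g^8) + (-3)*x0*x1*x2^2*g^6 + (-3)*x0*x1*x2^2*g^4 + -(x0*x1*x2^2*g^2) + x0*x1*x2*x3*g^7 + (3)*x0*x1*x2*x3*g^5 + (3)*x0*x1*x2*x3*g^3 + x0*x1*x2*x3*g + x0*x2^3*g^7 + (2)*x0*x2^3*g^5 + x0*x2^3*g^3 + -(x0*x2^2*x3*g^6) + (-2)*x0*x2^2*x3*g^4 + -(x0*x2^2*x3*g^2) + -(x1^3*x2*g^8) + (-3)*x1^3*x2*g^6 + (-3)*x1^3*x2*g^4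 + -(x1^3*x2*g^2) + x1^3*x3*g^7 + (3)*x1^3*x3*g^5 + (3)*x1^3*x3*g^3 + x1^3*x3*g + x1^2*x2^2*g^9 + (5)*x1^2*x2^2*g^7 + (8)*x1^2*x2^2*g^5 + (5)*x1^2*x2^2*g^3 + x1^2*x2^2*g + -(x1^2*x2*x3*g^8) + (-5)*x1^2*x2*x3*g^6 + (-8)*x1^2*x2*x3*g^4 + (-5)*x1^2*x2*x3*g^2 + -(x1^2*x2*x3) + (-2)*x1*x2^3*g^8 + (-6)*x1*x2^3*g^6 + (-6)*x1*x2^3*g^4 + (-2)*x1*x2^3*g^2 + (2)*x1*x2^2*x3*g^7 + (6)*x1*x2^2*x3*g^5 + (6)*x1*x2^2*x3*g^3 + (2)*x1*x2^2*x3*g + x2^4*g^7 + (2)*x2^4*g^5 + x2^4*g^3 + -(x2^3*x3*g^6) + (-2)*x2^3*x3*g^4 + -(x2^3*x3*g^2).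

Lemma iA_g (g a b c : R) : g <> 0 -> iA g a b c <> 0 -> a * g - (1 + g * g) * b + c * g <> 0.
Proof. intros Hg H Z; apply H; unfold iA.
replace (a - (/ g + g) * b + c) with ((a * g - (1 + g * g) * b + c * g) / g) by (field; exact Hg).
rewrite Z; unfold Rdiv; ring. Qed.

Lemma ic_nz (g : R) : ic g <> 0.
Proof. unfold ic. apply Ropp_neq_0_compat. unfold Rdiv. rewrite Rmult_1_l. apply Rinv_neq_0_compat.
  pose proof (pow2_ge_0 g). lra. Qed.

Section PI.
Variables (g xm2 xm1 x0 x1 x2 x3 x4 x5 : R).
Let C0 := iC g x0 x1 x2 x3 1 0 0 0.
Let C1 := iC g x0 x1 x2 x3 0 1 0 0.
Let C2 := iC g x0 x1 x2 x3 0 0 1 0.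
Let C3 := iC g x0 x1 x2 x3 0 0 0 1.
Let D0 := iD g x0 x1 x2 x3.
Let N0 := iN g x0 x1 x2 x3.
Let Y2 := C3 * iP g x2 x3 x4 x5 / ic g
   - (N0 + D0) * iN g x2 x3 x4 x5 * (iD g x1 x2 x3 x4 / iN g x1 x2 x3 x4 + 1) * N0.
Let Y1 := (C2 * iP g x1 x2 x3 x4 - C3 * iQ g x1 x2 x3 x4) / ic g - (N0 + D0) * iN g x1 x2 x3 x4 * D0.
Let Y0 := (C1 * iP g x0 x1 x2 x3 - C2 * iQ g x0 x1 x2 x3) / ic g.
Let Ym1 := (C0 * iP g xm1 x0 x1 x2 - C1 * iQ g xm1 x0 x1 x2) / ic g + (N0 + D0) * iN g xm1 x0 x1 x2 * D0.
Let Ym2 := - (C0 * iQ g xm2 xm1 x0 x1) / ic g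
   + (N0 + D0) * N0 * (iD g xm1 x0 x1 x2 / iN g xm1 x0 x1 x2 + 1) * iN g xm2 xm1 x0 x1.

Hypothesis Hg : g <> 0.
Hypothesis Hh : 1 + g ^ 2 <> 0.
Hypothesis HA1 : iA g x1 x2 x3 <> 0.
Hypothesis HA2 : iA g x2 x3 x4 <> 0.
Hypothesis HAm1 : iA g xm1 x0 x1 <> 0.
Hypothesis HA0 : iA g x0 x1 x2 <> 0.

Hypothesis HD2 : iD g x2 x3 x4 x5 <> 0.
Hypothesis HD1 : iD g x1 x2 x3 x4 <> 0.
Hypothesis HD0 : iD g x0 x1 x2 x3 <> 0.
Hypothesis HDm1 : iD g xm1 x0 x1 x2 <> 0.
Hypothesis HDm2 : iD g xm2 xm1 x0 x1 <> 0.

Ltac sideI := repeat split; try assumption; apply iA_g; assumption.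

Lemma Y2_eq : Y2 = iD g x2 x3 x4 x5 * (iq2 g xm2 xm1 x0 x1 x2 x3 x4 x5 / g ^ 3).
Proof. unfold Y2, C3, N0, D0, iC, iq2, ic, idN, idD, iN, iP, iD, iA. field; sideI. Qed.
Lemma Y1_eq : Y1 = iD g x1 x2 x3 x4 * (iq1 g xm2 xm1 x0 x1 x2 x3 x4 x5 / g ^ 3).
Proof. unfold Y1, C2, C3, N0, D0, iC, iq1, ic, idN, idD, iN, iP, iQ, iD, iA. field; sideI. Qed.
Lemma Y0_eq : Y0 = iD g x0 x1 x2 x3 * (iq0 g xm2 xm1 x0 x1 x2 x3 x4 x5 / g ^ 3).
Proof. unfold Y0, C1, C2, N0, D0, iC, iq0, ic, idN, idD, iN, iP, iQ, iD, iA. field; sideI. Qed.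
Lemma Ym1_eq : Ym1 = iD g xm1 x0 x1 x2 * (iqm1 g xm2 xm1 x0 x1 x2 x3 x4 x5 / g ^ 3).
Proof. unfold Ym1, C0, C1, N0, D0, iC, iqm1, ic, idN, idD, iN, iP, iQ, iD, iA. field; sideI. Qed.
Lemma Ym2_eq : Ym2 = iD g xm2 xm1 x0 x1 * (iqm2 g xm2 xm1 x0 x1 x2 x3 x4 x5 / g ^ 3).
Proof. unfold Ym2, C0, N0, D0, iC, iqm2, ic, idN, idD, iN, iP, iQ, iD, iA. field; sideI. Qed.
Lemma qsum : iq2 g xm2 xm1 x0 x1 x2 x3 x4 x5 + iq1 g xm2 xm1 x0 x1 x2 x3 x4 x5 + iq0 g xm2 xm1 x0 x1 x2 x3 x4 x5
  + iqm1 g xm2 xm1 x0 x1 x2 x3 x4 x5 + iqm2 g xm2 xm1 x0 x1 x2 x3 x4 x5 = 0.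
Proof. unfold iq2, iq1, iq0, iqm1, iqm2. ring. Qed.

Lemma iN_nz a b c d : iA g a b c <> 0 -> iA g b c d <> 0 -> iN g a b c d <> 0.
Proof. intros; unfold iN; repeat apply Rmult_integral_contrapositive_currified; assumption. Qed.

Lemma splitI (d0 d1 d2 d3 : R) :
  d0 = iF g xm2 xm1 x0 x1 x2 / ic g -> d1 = iF g xm1 x0 x1 x2 x3 / ic g ->
  d2 = iF g x0 x1 x2 x3 x4 / ic g -> d3 = iF g x1 x2 x3 x4 x5 / ic g ->
  iC g x0 x1 x2 x3 d0 d1 d2 d3 / D0 ^ 2 -
  ((N0 / D0 + 1) * (iN g x2 x3 x4 x5 / iD g x2 x3 x4 x5 * (1 / (iN g x1 x2 x3 x4 / iD g x1 x2 x3 x4) + 1) * (N0 / D0)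
     - N0 / D0 * (1 / (iN g xm1 x0 x1 x2 / iD g xm1 x0 x1 x2) + 1) * (iN g xm2 xm1 x0 x1 / iD g xm2 xm1 x0 x1)
     + iN g x1 x2 x3 x4 / iD g x1 x2 x3 x4 - iN g xm1 x0 x1 x2 / iD g xm1 x0 x1 x2))
  = (Y2 / iD g x2 x3 x4 x5 + Y1 / iD g x1 x2 x3 x4 + Y0 / D0 + Ym1 / iD g xm1 x0 x1 x2 + Ym2 / iD g xm2 xm1 x0 x1) / D0 ^ 2.
Proof.
intros -> -> -> ->.
pose proof (iN_nz _ _ _ _ HA1 HA2) as HN1.
pose proof (iN_nz _ _ _ _ HAm1 HA0) as HNm1.
unfold Y2, Y1, Y0, Ym1, Ym2, C0, C1, C2, C3, iC, iF, idN, idD.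
fold D0 N0.
field.
repeat split; try assumption. apply ic_nz.
Qed.

Lemma pureI (d0 d1 d2 d3 : R) :
  d0 = iF g xm2 xm1 x0 x1 x2 / ic g -> d1 = iF g xm1 x0 x1 x2 x3 / ic g ->
  d2 = iF g x0 x1 x2 x3 x4 / ic g -> d3 = iF g x1 x2 x3 x4 x5 / ic g ->
  iC g x0 x1 x2 x3 d0 d1 d2 d3 / D0 ^ 2 =
  ((N0 / D0 + 1) * (iN g x2 x3 x4 x5 / iD g x2 x3 x4 x5 * (1 / (iN g x1 x2 x3 x4 / iD g x1 x2 x3 x4) + 1) * (N0 / D0)
     - N0 / D0 * (1 / (iN g xm1 x0 x1 x2 / iD g xm1 x0 x1 x2) + 1) * (iN g xm2 xm1 x0 x1 / iD g xm2 xm1 x0 x1)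
     + iN g x1 x2 x3 x4 / iD g x1 x2 x3 x4 - iN g xm1 x0 x1 x2 / iD g xm1 x0 x1 x2)).
Proof.
intros E0 E1 E2 E3. apply Rminus_diag_uniq. rewrite (splitI d0 d1 d2 d3 E0 E1 E2 E3).
rewrite Y2_eq, Y1_eq, Y0_eq, Ym1_eq, Ym2_eq.
transitivity ((iq2 g xm2 xm1 x0 x1 x2 x3 x4 x5 + iq1 g xm2 xm1 x0 x1 x2 x3 x4 x5 + iq0 g xm2 xm1 x0 x1 x2 x3 x4 x5
  + iqm1 g xm2 xm1 x0 x1 x2 x3 x4 x5 + iqm2 g xm2 xm1 x0 x1 x2 x3 x4 x5) / g ^ 3 / D0 ^ 2).
- unfold D0. field. repeat split; try assumption.
- rewrite qsum. unfold Rdiv. ring.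
Qed.
End PI.


Definition cD (a b c d : R) := 2 - 2 * (c - b) ^ 2 - (d - 2 * c + b) * (c - 2 * b + a).
Definition cN (a b c d : R) := (d - 2 * c + b) * (c - 2 * b + a).
Definition cP (m1 u u1 u2 : R) := (u2 - u - 2) * (u1 - u + 1) * (m1 - u + 1) / 2.
Definition cQ (m2 m1 u u1 : R) := (m2 - u + 2) * (u1 - u - 1) * (m1 - u - 1) / 2.
Definition cF (m2 m1 u u1 u2 : R) := cP m1 u u1 u2 / cD m1 u u1 u2 - cQ m2 m1 u u1 / cD m2 m1 u u1.
Definition ccc : R := 1 / 4.
Definition cdN (a b c d da db dc dd : R) := (dd - 2 * dc + db) * (c - 2 * b + a) + (d - 2 * c + b) * (dc - 2 * db + da).
Definition cdD (a b c d da db dc dd : R) := - (4 * (c - b) * (dc - db)) - cdN a b c d da db dc dd.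
Definition cC (a b c d da db dc dd : R) :=
  cdN a b c d da db dc dd * cD a b c d - cN a b c d * cdD a b c d da db dc dd.
Definition cqm2 (xm2 xm1 x0 x1 x2 x3 x4 x5 : R) : R :=
  (4)*x0*x1^3 + (-16)*x0*x1^2*x2 + (4)*x0*x1^2*x3 + (20)*x0*x1*x2^2 + (-8)*x0*x1*x2*x3 + (-4)*x0*x1 + (-8)*x0*x2^3 + (4)*x0*x2^2*x3 + (8)*x0*x2 + (-4)*x0*x3 + (-4)*x1^4 + (16)*x1^3*x2 + (-4)*x1^3*x3 + (4)*x1^3 + (-20)*x1^2*x2^2 + (8)*x1^2*x2*x3 + (-16)*x1^2*x2 + (4)*x1^2*x3 + (4)*x1^2 + (8)*x1*x2^3 + (-4)*x1*x2^2*x3 + (20)*x1*x2^2 + (-8)*x1*x2*x3 + (-8)*x1*x2 + (4)*x1*x3 + (-4)*x1 + (-8)*x2^3 + (4)*x2^2*x3 + (8)*x2 + (-4)*x3.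
Definition cqm1 (xm2 xm1 x0 x1 x2 x3 x4 x5 : R) : R :=
  (-2)*x0*x1^3 + (12)*x0*x1^2*x2 + (-6)*x0*x1^2*x3 + (-4)*x0*x1^2 + (-18)*x0*x1*x2^2 + (12)*x0*x1*x2*x3 + (16)*x0*x1*x2 + (-8)*x0*x1*x3 + (-6)*x0*x1 + (8)*x0*x2^3 + (-6)*x0*x2^2*x3 + (-12)*x0*x2^2 + (8)*x0*x2*x3 + (8)*x0*x2 + (-2)*x0*x3 + (-4)*x0 + (-6)*x1^3*x2 + (8)*x1^3*x3 + (4)*x1^3 + (12)*x1^2*x2^2 + (-18)*x1^2*x2*x3 + (-20)*x1^2*x2 + (12)*x1^2*x3 + (16)*x1^2 + (-6)*x1*x2^3 + (12)*x1*x2^2*x3 + (20)*x1*x2^2 + (-16)*x1*x2*x3 + (-34)*x1*x2 + (8)*x1*x3 + (12)*x1 + (-2)*x2^3*x3 + (-4)*x2^3 + (4)*x2^2*x3 + (16)*x2^2 + (-6)*x2*x3 + (-12)*x2 + (4)*x3.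
Definition cq0 (xm2 xm1 x0 x1 x2 x3 x4 x5 : R) : R :=
  (-4)*x0*x1^3 + (12)*x0*x1^2*x2 + (-4)*x0*x1^2 + (-12)*x0*x1*x2^2 + (8)*x0*x1*x2 + (4)*x0*x1 + (4)*x0*x2^3 + (-4)*x0*x2^2 + (-4)*x0*x2 + (4)*x0 + (4)*x1^4 + (-8)*x1^3*x2 + (-4)*x1^3*x3 + (4)*x1^3 + (12)*x1^2*x2*x3 + (-4)*x1^2*x2 + (-4)*x1^2*x3 + (-4)*x1^2 + (8)*x1*x2^3 + (-12)*x1*x2^2*x3 + (-4)*x1*x2^2 + (8)*x1*x2*x3 + (4)*x1*x3 + (-4)*x1 + (-4)*x2^4 + (4)*x2^3*x3 + (4)*x2^3 + (-4)*x2^2*x3 + (4)*x2^2 + (-4)*x2*x3 + (-4)*x2 + (4)*x3.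
Definition cq1 (xm2 xm1 x0 x1 x2 x3 x4 x5 : R) : R :=
  (2)*x0*x1^3 + (-12)*x0*x1^2*x2 + (6)*x0*x1^2*x3 + (4)*x0*x1^2 + (18)*x0*x1*x2^2 + (-12)*x0*x1*x2*x3 + (-16)*x0*x1*x2 + (8)*x0*x1*x3 + (6)*x0*x1 + (-8)*x0*x2^3 + (6)*x0*x2^2*x3 + (12)*x0*x2^2 + (-8)*x0*x2*x3 + (-8)*x0*x2 + (2)*x0*x3 + (4)*x0 + (6)*x1^3*x2 + (-8)*x1^3*x3 + (-4)*x1^3 + (-12)*x1^2*x2^2 + (18)*x1^2*x2*x3 + (20)*x1^2*x2 + (-12)*x1^2*x3 + (-16)*x1^2 + (6)*x1*x2^3 + (-12)*x1*x2^2*x3 + (-20)*x1*x2^2 + (16)*x1*x2*x3 + (34)*x1*x2 + (-8)*x1*x3 + (-12)*x1 + (2)*x2^3*x3 + (4)*x2^3 + (-4)*x2^2*x3 + (-16)*x2^2 + (6)*x2*x3 + (12)*x2 + (-4)*x3.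
Definition cq2 (xm2 xm1 x0 x1 x2 x3 x4 x5 : R) : R :=
  (4)*x0*x1^2*x2 + (-4)*x0*x1^2*x3 + (4)*x0*x1^2 + (-8)*x0*x1*x2^2 + (8)*x0*x1*x2*x3 + (-8)*x0*x1*x2 + (4)*x0*x2^3 + (-4)*x0*x2^2*x3 + (4)*x0*x2^2 + (-4)*x0*x2 + (4)*x0*x3 + (-4)*x0 + (-8)*x1^3*x2 + (8)*x1^3*x3 + (-8)*x1^3 + (20)*x1^2*x2^2 + (-20)*x1^2*x2*x3 + (20)*x1^2*x2 + (-16)*x1*x2^3 + (16)*x1*x2^2*x3 + (-16)*x1*x2^2 + (8)*x1*x2 + (-8)*x1*x3 + (8)*x1 + (4)*x2^4 + (-4)*x2^3*x3 + (4)*x2^3 + (-4)*x2^2 + (4)*x2*x3 + (-4)*x2.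

Section PC.
Variables (xm2 xm1 x0 x1 x2 x3 x4 x5 : R).
Let C0 := cC x0 x1 x2 x3 1 0 0 0.
Let C1 := cC x0 x1 x2 x3 0 1 0 0.
Let C2 := cC x0 x1 x2 x3 0 0 1 0.
Let C3 := cC x0 x1 x2 x3 0 0 0 1.
Let D0 := cD x0 x1 x2 x3.
Let N0 := cN x0 x1 x2 x3.
Let Y2 := C3 * cP x2 x3 x4 x5 / ccc
   - (N0 + D0) * cN x2 x3 x4 x5 * (cD x1 x2 x3 x4 / cN x1 x2 x3 x4 + 1) * N0.
Let Y1 := (C2 * cP x1 x2 x3 x4 - C3 * cQ x1 x2 x3 x4) / ccc - (N0 + D0) * cN x1 x2 x3 x4 * D0.
Let Y0 := (C1 * cP x0 x1 x2 x3 - C2 * cQ x0 x1 x2 x3) / ccc.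
Let Ym1 := (C0 * cP xm1 x0 x1 x2 - C1 * cQ xm1 x0 x1 x2) / ccc + (N0 + D0) * cN xm1 x0 x1 x2 * D0.
Let Ym2 := - (C0 * cQ xm2 xm1 x0 x1) / ccc
   + (N0 + D0) * N0 * (cD xm1 x0 x1 x2 / cN xm1 x0 x1 x2 + 1) * cN xm2 xm1 x0 x1.

Hypothesis HS1 : x3 - 2 * x2 + x1 <> 0.
Hypothesis HS2 : x4 - 2 * x3 + x2 <> 0.
Hypothesis HSm1 : x1 - 2 * x0 + xm1 <> 0.
Hypothesis HS0 : x2 - 2 * x1 + x0 <> 0.
Hypothesis HD2 : cD x2 x3 x4 x5 <> 0.
Hypothesis HD1 : cD x1 x2 x3 x4 <> 0.
Hypothesis HD0 : cD x0 x1 x2 x3 <> 0.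
Hypothesis HDm1 : cD xm1 x0 x1 x2 <> 0.
Hypothesis HDm2 : cD xm2 xm1 x0 x1 <> 0.

Lemma ccc_nz : ccc <> 0. Proof. unfold ccc; lra. Qed.

Ltac sideC := repeat split; try assumption.

Lemma cY2_eq : Y2 = cD x2 x3 x4 x5 * cq2 xm2 xm1 x0 x1 x2 x3 x4 x5.
Proof. unfold Y2, C3, N0, D0, cC, cq2, ccc, cdD, cdN, cN, cP, cD. field; sideC. Qed.
Lemma cY1_eq : Y1 = cD x1 x2 x3 x4 * cq1 xm2 xm1 x0 x1 x2 x3 x4 x5.
Proof. unfold Y1, C2, C3, N0, D0, cC, cq1, ccc, cdD, cdN, cN, cP, cQ, cD. field; sideC. Qed.
Lemma cY0_eq : Y0 = cD x0 x1 x2 x3 * cq0 xm2 xm1 x0 x1 x2 x3 x4 x5.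
Proof. unfold Y0, C1, C2, N0, D0, cC, cq0, ccc, cdD, cdN, cN, cP, cQ, cD. field; sideC. Qed.
Lemma cYm1_eq : Ym1 = cD xm1 x0 x1 x2 * cqm1 xm2 xm1 x0 x1 x2 x3 x4 x5.
Proof. unfold Ym1, C0, C1, N0, D0, cC, cqm1, ccc, cdD, cdN, cN, cP, cQ, cD. field; sideC. Qed.
Lemma cYm2_eq : Ym2 = cD xm2 xm1 x0 x1 * cqm2 xm2 xm1 x0 x1 x2 x3 x4 x5.
Proof. unfold Ym2, C0, N0, D0, cC, cqm2, ccc, cdD, cdN, cN, cP, cQ, cD. field; sideC. Qed.
Lemma cqsum : cq2 xm2 xm1 x0 x1 x2 x3 x4 x5 + cq1 xm2 xm1 x0 x1 x2 x3 x4 x5 + cq0 xm2 xm1 x0 x1 x2 x3 x4 x5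
  + cqm1 xm2 xm1 x0 x1 x2 x3 x4 x5 + cqm2 xm2 xm1 x0 x1 x2 x3 x4 x5 = 0.
Proof. unfold cq2, cq1, cq0, cqm1, cqm2. ring. Qed.

Lemma cN_nz a b c d : d - 2 * c + b <> 0 -> c - 2 * b + a <> 0 -> cN a b c d <> 0.
Proof. intros; unfold cN; apply Rmult_integral_contrapositive_currified; assumption. Qed.

Lemma splitC (d0 d1 d2 d3 : R) :
  d0 = cF xm2 xm1 x0 x1 x2 / ccc -> d1 = cF xm1 x0 x1 x2 x3 / ccc ->
  d2 = cF x0 x1 x2 x3 x4 / ccc -> d3 = cF x1 x2 x3 x4 x5 / ccc ->
  cC x0 x1 x2 x3 d0 d1 d2 d3 / D0 ^ 2 -
  ((N0 / D0 + 1) * (cN x2 x3 x4 x5 / cD x2 x3 x4 x5 * (1 / (cN x1 x2 x3 x4 / cD x1 x2 x3 x4) + 1) * (N0 / D0)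
     - N0 / D0 * (1 / (cN xm1 x0 x1 x2 / cD xm1 x0 x1 x2) + 1) * (cN xm2 xm1 x0 x1 / cD xm2 xm1 x0 x1)
     + cN x1 x2 x3 x4 / cD x1 x2 x3 x4 - cN xm1 x0 x1 x2 / cD xm1 x0 x1 x2))
  = (Y2 / cD x2 x3 x4 x5 + Y1 / cD x1 x2 x3 x4 + Y0 / D0 + Ym1 / cD xm1 x0 x1 x2 + Ym2 / cD xm2 xm1 x0 x1) / D0 ^ 2.
Proof.
intros -> -> -> ->.
pose proof (cN_nz _ _ _ _ HS2 HS1) as HN1.
pose proof (cN_nz _ _ _ _ HS0 HSm1) as HNm1.
pose proof ccc_nz.
unfold Y2, Y1, Y0, Ym1, Ym2, C0, C1, C2, C3, cC, cF, cdD, cdN.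
fold D0 N0.
field.
repeat split; assumption.
Qed.

Lemma pureC (d0 d1 d2 d3 : R) :
  d0 = cF xm2 xm1 x0 x1 x2 / ccc -> d1 = cF xm1 x0 x1 x2 x3 / ccc ->
  d2 = cF x0 x1 x2 x3 x4 / ccc -> d3 = cF x1 x2 x3 x4 x5 / ccc ->
  cC x0 x1 x2 x3 d0 d1 d2 d3 / D0 ^ 2 =
  ((N0 / D0 + 1) * (cN x2 x3 x4 x5 / cD x2 x3 x4 x5 * (1 / (cN x1 x2 x3 x4 / cD x1 x2 x3 x4) + 1) * (N0 / D0)
     - N0 / D0 * (1 / (cN xm1 x0 x1 x2 / cD xm1 x0 x1 x2) + 1) * (cN xm2 xm1 x0 x1 / cD xm2 xm1 x0 x1)
     + cN x1 x2 x3 x4 / cD x1 x2 x3 x4 - cN xm1 x0 x1 x2 / cD xm1 x0 x1 x2)).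
Proof.
intros E0 E1 E2 E3. apply Rminus_diag_uniq. rewrite (splitC d0 d1 d2 d3 E0 E1 E2 E3).
rewrite cY2_eq, cY1_eq, cY0_eq, cYm1_eq, cYm2_eq.
transitivity ((cq2 xm2 xm1 x0 x1 x2 x3 x4 x5 + cq1 xm2 xm1 x0 x1 x2 x3 x4 x5 + cq0 xm2 xm1 x0 x1 x2 x3 x4 x5
  + cqm1 xm2 xm1 x0 x1 x2 x3 x4 x5 + cqm2 xm2 xm1 x0 x1 x2 x3 x4 x5) / D0 ^ 2).
- unfold D0. field. repeat split; try assumption.
- rewrite cqsum. unfold Rdiv. ring.
Qed.
End PC.


Definition dD (a b c d : R) := (d - b) * (c - a) + (c - b).
Definition dN (a b c d : R) := - ((d - b) * (c - a)).
Definition dP (m1 u u1 u2 : R) := - ((u - m1) * (u - u2)).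
Definition dQ (m2 m1 u u1 : R) := (u - u1) * (u - m2).
Definition dF (m2 m1 u u1 u2 : R) := dP m1 u u1 u2 / dD m1 u u1 u2 - dQ m2 m1 u u1 / dD m2 m1 u u1.
Definition dcc : R := 1.
Definition ddN (a b c d da db dc dd : R) := - ((dd - db) * (c - a) + (d - b) * (dc - da)).
Definition ddD (a b c d da db dc dd : R) := (dd - db) * (c - a) + (d - b) * (dc - da) + (dc - db).
Definition dC (a b c d da db dc dd : R) :=
  ddN a b c d da db dc dd * dD a b c d - dN a b c d * ddD a b c d da db dc dd.

Definition dqm2 (xm2 xm1 x0 x1 x2 x3 x4 x5 : R) : R :=
  0.
Definition dqm1 (xm2 xm1 x0 x1 x2 x3 x4 x5 : R) : R :=
  x0*x1^2 + -(x0*x1*x2) + -(x0*x1*x3) + x0*x2*x3 + -(x1^2*x2) + x1*x2^2 + x1*x2*x3 + -(x2^2*x3).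
Definition dq0 (xm2 xm1 x0 x1 x2 x3 x4 x5 : R) : R :=
  0.
Definition dq1 (xm2 xm1 x0 x1 x2 x3 x4 x5 : R) : R :=
  -(x0*x1^2) + x0*x1*x2 + x0*x1*x3 + -(x0*x2*x3) + x1^2*x2 + -(x1*x2^2) + -(x1*x2*x3) + x2^2*x3.
Definition dq2 (xm2 xm1 x0 x1 x2 x3 x4 x5 : R) : R :=
  0.

Section PD.
Variables (xm2 xm1 x0 x1 x2 x3 x4 x5 : R).
Let C0 := dC x0 x1 x2 x3 1 0 0 0.
Let C1 := dC x0 x1 x2 x3 0 1 0 0.
Let C2 := dC x0 x1 x2 x3 0 0 1 0.
Let C3 := dC x0 x1 x2 x3 0 0 0 1.
Let D0 := dD x0 x1 x2 x3.
Let N0 := dN x0 x1 x2 x3.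
Let Y2 := C3 * dP x2 x3 x4 x5 / dcc
   - (N0 + D0) * dN x2 x3 x4 x5 * (dD x1 x2 x3 x4 / dN x1 x2 x3 x4 + 1) * N0.
Let Y1 := (C2 * dP x1 x2 x3 x4 - C3 * dQ x1 x2 x3 x4) / dcc - (N0 + D0) * dN x1 x2 x3 x4 * D0.
Let Y0 := (C1 * dP x0 x1 x2 x3 - C2 * dQ x0 x1 x2 x3) / dcc.
Let Ym1 := (C0 * dP xm1 x0 x1 x2 - C1 * dQ xm1 x0 x1 x2) / dcc + (N0 + D0) * dN xm1 x0 x1 x2 * D0.
Let Ym2 := - (C0 * dQ xm2 xm1 x0 x1) / dcc
   + (N0 + D0) * N0 * (dD xm1 x0 x1 x2 / dN xm1 x0 x1 x2 + 1) * dN xm2 xm1 x0 x1.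

Hypothesis HS1 : x4 - x2 <> 0.
Hypothesis HS2 : x3 - x1 <> 0.
Hypothesis HSm1 : x2 - x0 <> 0.
Hypothesis HS0 : x1 - xm1 <> 0.
Hypothesis HD2 : dD x2 x3 x4 x5 <> 0.
Hypothesis HD1 : dD x1 x2 x3 x4 <> 0.
Hypothesis HD0 : dD x0 x1 x2 x3 <> 0.
Hypothesis HDm1 : dD xm1 x0 x1 x2 <> 0.
Hypothesis HDm2 : dD xm2 xm1 x0 x1 <> 0.

Lemma dcc_nz : dcc <> 0. Proof. unfold dcc; lra. Qed.

Ltac sideD := repeat split; try assumption.

Lemma dY2_eq : Y2 = dD x2 x3 x4 x5 * dq2 xm2 xm1 x0 x1 x2 x3 x4 x5.
Proof. unfold Y2, C3, N0, D0, dC, dq2, dcc, ddD, ddN, dN, dP, dD. field; sideD. Qed.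
Lemma dY1_eq : Y1 = dD x1 x2 x3 x4 * dq1 xm2 xm1 x0 x1 x2 x3 x4 x5.
Proof. unfold Y1, C2, C3, N0, D0, dC, dq1, dcc, ddD, ddN, dN, dP, dQ, dD. field; sideD. Qed.
Lemma dY0_eq : Y0 = dD x0 x1 x2 x3 * dq0 xm2 xm1 x0 x1 x2 x3 x4 x5.
Proof. unfold Y0, C1, C2, N0, D0, dC, dq0, dcc, ddD, ddN, dN, dP, dQ, dD. field; sideD. Qed.
Lemma dYm1_eq : Ym1 = dD xm1 x0 x1 x2 * dqm1 xm2 xm1 x0 x1 x2 x3 x4 x5.
Proof. unfold Ym1, C0, C1, N0, D0, dC, dqm1, dcc, ddD, ddN, dN, dP, dQ, dD. field; sideD. Qed.
Lemma dYm2_eq : Ym2 = dD xm2 xm1 x0 x1 * dqm2 xm2 xm1 x0 x1 x2 x3 x4 x5.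
Proof. unfold Ym2, C0, N0, D0, dC, dqm2, dcc, ddD, ddN, dN, dP, dQ, dD. field; sideD. Qed.
Lemma dqsum : dq2 xm2 xm1 x0 x1 x2 x3 x4 x5 + dq1 xm2 xm1 x0 x1 x2 x3 x4 x5 + dq0 xm2 xm1 x0 x1 x2 x3 x4 x5
  + dqm1 xm2 xm1 x0 x1 x2 x3 x4 x5 + dqm2 xm2 xm1 x0 x1 x2 x3 x4 x5 = 0.
Proof. unfold dq2, dq1, dq0, dqm1, dqm2. ring. Qed.

Lemma dN_nz a b c d : d - b <> 0 -> c - a <> 0 -> dN a b c d <> 0.
Proof. intros; unfold dN; apply Ropp_neq_0_compat; apply Rmult_integral_contrapositive_currified; assumption. Qed.

Lemma splitD (d0 d1 d2 d3 : R) :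
  d0 = dF xm2 xm1 x0 x1 x2 / dcc -> d1 = dF xm1 x0 x1 x2 x3 / dcc ->
  d2 = dF x0 x1 x2 x3 x4 / dcc -> d3 = dF x1 x2 x3 x4 x5 / dcc ->
  dC x0 x1 x2 x3 d0 d1 d2 d3 / D0 ^ 2 -
  ((N0 / D0 + 1) * (dN x2 x3 x4 x5 / dD x2 x3 x4 x5 * (1 / (dN x1 x2 x3 x4 / dD x1 x2 x3 x4) + 1) * (N0 / D0)
     - N0 / D0 * (1 / (dN xm1 x0 x1 x2 / dD xm1 x0 x1 x2) + 1) * (dN xm2 xm1 x0 x1 / dD xm2 xm1 x0 x1)
     + dN x1 x2 x3 x4 / dD x1 x2 x3 x4 - dN xm1 x0 x1 x2 / dD xm1 x0 x1 x2))
  = (Y2 / dD x2 x3 x4 x5 + Y1 / dD x1 x2 x3 x4 + Y0 / D0 + Ym1 / dD xm1 x0 x1 x2 + Ym2 / dD xm2 xm1 x0 x1) / D0 ^ 2.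
Proof.
intros -> -> -> ->.
pose proof (dN_nz _ _ _ _ HS1 HS2) as HN1.
pose proof (dN_nz _ _ _ _ HSm1 HS0) as HNm1.
pose proof dcc_nz.
unfold Y2, Y1, Y0, Ym1, Ym2, C0, C1, C2, C3, dC, dF, ddD, ddN.
fold D0 N0.
field.
repeat split; assumption.
Qed.

Lemma pureD (d0 d1 d2 d3 : R) :
  d0 = dF xm2 xm1 x0 x1 x2 / dcc -> d1 = dF xm1 x0 x1 x2 x3 / dcc ->
  d2 = dF x0 x1 x2 x3 x4 / dcc -> d3 = dF x1 x2 x3 x4 x5 / dcc ->
  dC x0 x1 x2 x3 d0 d1 d2 d3 / D0 ^ 2 =
  ((N0 / D0 + 1) * (dN x2 x3 x4 x5 / dD x2 x3 x4 x5 * (1 / (dN x1 x2 x3 x4 / dD x1 x2 x3 x4) + 1) * (N0 / D0)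
     - N0 / D0 * (1 / (dN xm1 x0 x1 x2 / dD xm1 x0 x1 x2) + 1) * (dN xm2 xm1 x0 x1 / dD xm2 xm1 x0 x1)
     + dN x1 x2 x3 x4 / dD x1 x2 x3 x4 - dN xm1 x0 x1 x2 / dD xm1 x0 x1 x2)).
Proof.
intros E0 E1 E2 E3. apply Rminus_diag_uniq. rewrite (splitD d0 d1 d2 d3 E0 E1 E2 E3).
rewrite dY2_eq, dY1_eq, dY0_eq, dYm1_eq, dYm2_eq.
transitivity ((dq2 xm2 xm1 x0 x1 x2 x3 x4 x5 + dq1 xm2 xm1 x0 x1 x2 x3 x4 x5 + dq0 xm2 xm1 x0 x1 x2 x3 x4 x5
  + dqm1 xm2 xm1 x0 x1 x2 x3 x4 x5 + dqm2 xm2 xm1 x0 x1 x2 x3 x4 x5) / D0 ^ 2).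
- unfold D0. field. repeat split; try assumption.
- rewrite dqsum. unfold Rdiv. ring.
Qed.
End PD.


Definition aD (a b c d : R) := 2 * (d - c) * (b - a) - (d - b) * (c - a).
Definition aN (a b c d : R) := (d - b) * (c - a).
Definition aP (m1 u u1 u2 : R) := (u2 - u) * (u - u1) * (u - m1).
Definition aQ (m2 m1 u u1 : R) := (m2 - u) * (u - u1) * (u - m1).
Definition aF (m2 m1 u u1 u2 : R) := aP m1 u u1 u2 / aD m1 u u1 u2 - aQ m2 m1 u u1 / aD m2 m1 u u1.
Definition acc : R := 1 / 2.
Definition adN (a b c d da db dc dd : R) := (dd - db) * (c - a) + (d - b) * (dc - da).
Definition adD (a b c d da db dc dd : R) := 2 * ((dd - dc) * (b - a) + (d - c) * (db - da)) - adN a b c d da db dc dd.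
Definition aC (a b c d da db dc dd : R) :=
  adN a b c d da db dc dd * aD a b c d - aN a b c d * adD a b c d da db dc dd.

Definition aqm2 (xm2 xm1 x0 x1 x2 x3 x4 x5 : R) : R :=
  0.
Definition aqm1 (xm2 xm1 x0 x1 x2 x3 x4 x5 : R) : R :=
  (-2)*x0^2*x1*x2 + (2)*x0^2*x1*x3 + (2)*x0^2*x2*x3 + (-2)*x0^2*x3^2 + (2)*x0*x1^2*x2 + (-2)*x0*x1^2*x3 + (2)*x0*x1*x2^2 + (-4)*x0*x1*x2*x3 + (2)*x0*x1*x3^2 + (-2)*x0*x2^2*x3 + (2)*x0*x2*x3^2 + (-2)*x1^2*x2^2 + (2)*x1^2*x2*x3 + (2)*x1*x2^2*x3 + (-2)*x1*x2*x3^2.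
Definition aq0 (xm2 xm1 x0 x1 x2 x3 x4 x5 : R) : R :=
  0.
Definition aq1 (xm2 xm1 x0 x1 x2 x3 x4 x5 : R) : R :=
  (2)*x0^2*x1*x2 + (-2)*x0^2*x1*x3 + (-2)*x0^2*x2*x3 + (2)*x0^2*x3^2 + (-2)*x0*x1^2*x2 + (2)*x0*x1^2*x3 + (-2)*x0*x1*x2^2 + (4)*x0*x1*x2*x3 + (-2)*x0*x1*x3^2 + (2)*x0*x2^2*x3 + (-2)*x0*x2*x3^2 + (2)*x1^2*x2^2 + (-2)*x1^2*x2*x3 + (-2)*x1*x2^2*x3 + (2)*x1*x2*x3^2.
Definition aq2 (xm2 xm1 x0 x1 x2 x3 x4 x5 : R) : R :=
  0.

Section PA.
Variables (xm2 xm1 x0 x1 x2 x3 x4 x5 : R).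
Let C0 := aC x0 x1 x2 x3 1 0 0 0.
Let C1 := aC x0 x1 x2 x3 0 1 0 0.
Let C2 := aC x0 x1 x2 x3 0 0 1 0.
Let C3 := aC x0 x1 x2 x3 0 0 0 1.
Let D0 := aD x0 x1 x2 x3.
Let N0 := aN x0 x1 x2 x3.
Let Y2 := C3 * aP x2 x3 x4 x5 / acc
   - (N0 + D0) * aN x2 x3 x4 x5 * (aD x1 x2 x3 x4 / aN x1 x2 x3 x4 + 1) * N0.
Let Y1 := (C2 * aP x1 x2 x3 x4 - C3 * aQ x1 x2 x3 x4) / acc - (N0 + D0) * aN x1 x2 x3 x4 * D0.
Let Y0 := (C1 * aP x0 x1 x2 x3 - C2 * aQ x0 x1 x2 x3) / acc.
Let Ym1 := (C0 * aP xm1 x0 x1 x2 - C1 * aQ xm1 x0 x1 x2) / acc + (N0 + D0) * aN xm1 x0 x1 x2 * D0.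
Let Ym2 := - (C0 * aQ xm2 xm1 x0 x1) / acc
   + (N0 + D0) * N0 * (aD xm1 x0 x1 x2 / aN xm1 x0 x1 x2 + 1) * aN xm2 xm1 x0 x1.

Hypothesis HS1 : x4 - x2 <> 0.
Hypothesis HS2 : x3 - x1 <> 0.
Hypothesis HSm1 : x2 - x0 <> 0.
Hypothesis HS0 : x1 - xm1 <> 0.
Hypothesis HD2 : aD x2 x3 x4 x5 <> 0.
Hypothesis HD1 : aD x1 x2 x3 x4 <> 0.
Hypothesis HD0 : aD x0 x1 x2 x3 <> 0.
Hypothesis HDm1 : aD xm1 x0 x1 x2 <> 0.
Hypothesis HDm2 : aD xm2 xm1 x0 x1 <> 0.

Lemma acc_nz : acc <> 0. Proof. unfold acc; lra. Qed.

Ltac sideA := repeat split; try assumption.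

Lemma aY2_eq : Y2 = aD x2 x3 x4 x5 * aq2 xm2 xm1 x0 x1 x2 x3 x4 x5.
Proof. unfold Y2, C3, N0, D0, aC, aq2, acc, adD, adN, aN, aP, aD. field; sideA. Qed.
Lemma aY1_eq : Y1 = aD x1 x2 x3 x4 * aq1 xm2 xm1 x0 x1 x2 x3 x4 x5.
Proof. unfold Y1, C2, C3, N0, D0, aC, aq1, acc, adD, adN, aN, aP, aQ, aD. field; sideA. Qed.
Lemma aY0_eq : Y0 = aD x0 x1 x2 x3 * aq0 xm2 xm1 x0 x1 x2 x3 x4 x5.
Proof. unfold Y0, C1, C2, N0, D0, aC, aq0, acc, adD, adN, aN, aP, aQ, aD. field; sideA. Qed.
Lemma aYm1_eq : Ym1 = aD xm1 x0 x1 x2 * aqm1 xm2 xm1 x0 x1 x2 x3 x4 x5.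
Proof. unfold Ym1, C0, C1, N0, D0, aC, aqm1, acc, adD, adN, aN, aP, aQ, aD. field; sideA. Qed.
Lemma aYm2_eq : Ym2 = aD xm2 xm1 x0 x1 * aqm2 xm2 xm1 x0 x1 x2 x3 x4 x5.
Proof. unfold Ym2, C0, N0, D0, aC, aqm2, acc, adD, adN, aN, aP, aQ, aD. field; sideA. Qed.
Lemma aqsum : aq2 xm2 xm1 x0 x1 x2 x3 x4 x5 + aq1 xm2 xm1 x0 x1 x2 x3 x4 x5 + aq0 xm2 xm1 x0 x1 x2 x3 x4 x5
  + aqm1 xm2 xm1 x0 x1 x2 x3 x4 x5 + aqm2 xm2 xm1 x0 x1 x2 x3 x4 x5 = 0.
Proof. unfold aq2, aq1, aq0, aqm1, aqm2. ring. Qed.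

Lemma aN_nz a b c d : d - b <> 0 -> c - a <> 0 -> aN a b c d <> 0.
Proof. intros; unfold aN; apply Rmult_integral_contrapositive_currified; assumption. Qed.

Lemma splitA (d0 d1 d2 d3 : R) :
  d0 = aF xm2 xm1 x0 x1 x2 / acc -> d1 = aF xm1 x0 x1 x2 x3 / acc ->
  d2 = aF x0 x1 x2 x3 x4 / acc -> d3 = aF x1 x2 x3 x4 x5 / acc ->
  aC x0 x1 x2 x3 d0 d1 d2 d3 / D0 ^ 2 -
  ((N0 / D0 + 1) * (aN x2 x3 x4 x5 / aD x2 x3 x4 x5 * (1 / (aN x1 x2 x3 x4 / aD x1 x2 x3 x4) + 1) * (N0 / D0)
     - N0 / D0 * (1 / (aN xm1 x0 x1 x2 / aD xm1 x0 x1 x2) + 1) * (aN xm2 xm1 x0 x1 / aD xm2 xm1 x0 x1)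
     + aN x1 x2 x3 x4 / aD x1 x2 x3 x4 - aN xm1 x0 x1 x2 / aD xm1 x0 x1 x2))
  = (Y2 / aD x2 x3 x4 x5 + Y1 / aD x1 x2 x3 x4 + Y0 / D0 + Ym1 / aD xm1 x0 x1 x2 + Ym2 / aD xm2 xm1 x0 x1) / D0 ^ 2.
Proof.
intros -> -> -> ->.
pose proof (aN_nz _ _ _ _ HS1 HS2) as HN1.
pose proof (aN_nz _ _ _ _ HSm1 HS0) as HNm1.
pose proof acc_nz.
unfold Y2, Y1, Y0, Ym1, Ym2, C0, C1, C2, C3, aC, aF, adD, adN.
fold D0 N0.
field.
repeat split; assumption.
Qed.

Lemma pureA (d0 d1 d2 d3 : R) :
  d0 = aF xm2 xm1 x0 x1 x2 / acc -> d1 = aF xm1 x0 x1 x2 x3 / acc ->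
  d2 = aF x0 x1 x2 x3 x4 / acc -> d3 = aF x1 x2 x3 x4 x5 / acc ->
  aC x0 x1 x2 x3 d0 d1 d2 d3 / D0 ^ 2 =
  ((N0 / D0 + 1) * (aN x2 x3 x4 x5 / aD x2 x3 x4 x5 * (1 / (aN x1 x2 x3 x4 / aD x1 x2 x3 x4) + 1) * (N0 / D0)
     - N0 / D0 * (1 / (aN xm1 x0 x1 x2 / aD xm1 x0 x1 x2) + 1) * (aN xm2 xm1 x0 x1 / aD xm2 xm1 x0 x1)
     + aN x1 x2 x3 x4 / aD x1 x2 x3 x4 - aN xm1 x0 x1 x2 / aD xm1 x0 x1 x2)).
Proof.
intros E0 E1 E2 E3. apply Rminus_diag_uniq. rewrite (splitA d0 d1 d2 d3 E0 E1 E2 E3).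
rewrite aY2_eq, aY1_eq, aY0_eq, aYm1_eq, aYm2_eq.
transitivity ((aq2 xm2 xm1 x0 x1 x2 x3 x4 x5 + aq1 xm2 xm1 x0 x1 x2 x3 x4 x5 + aq0 xm2 xm1 x0 x1 x2 x3 x4 x5
  + aqm1 xm2 xm1 x0 x1 x2 x3 x4 x5 + aqm2 xm2 xm1 x0 x1 x2 x3 x4 x5) / D0 ^ 2).
- unfold D0. field. repeat split; try assumption.
- rewrite aqsum. unfold Rdiv. ring.
Qed.
End PA.



Lemma Gi_conv g v n : Gi g v n = iN g (sh v n 0) (sh v n 1) (sh v n 2) (sh v n 3) / iD g (sh v n 0) (sh v n 1) (sh v n 2) (sh v n 3).
Proof. reflexivity. Qed.
Lemma Fi_conv g v n : Fi g v n = iF g (sh v n (-2)) (sh v n (-1)) (sh v n 0) (sh v n 1) (sh v n 2).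
Proof. reflexivity. Qed.
Lemma NDi_conv g v n : NDi g v n -> iD g (sh v n 0) (sh v n 1) (sh v n 2) (sh v n 3) <> 0.
Proof. intros [_ [_ H]]. exact H. Qed.
Lemma Gnz_A g a b c d : iN g a b c d / iD g a b c d <> 0 -> iA g a b c <> 0 /\ iA g b c d <> 0.
Proof. intro H. apply div_nz_l in H. unfold iN in H. split.
 - apply prod_nz_l in H. apply prod_nz_r in H. exact H.
 - apply prod_nz_r in H. exact H. Qed.

Lemma caseI : forall g : R, g <> 0 -> g ^ 2 <> -1 ->
     transforms (- (1 / (1 + g ^ 2))) (Fi g) (NDi g) (Gi g).
Proof.
intros g Hg Hg2 u Hs Hnd Hnz n t.
assert (Hh : 1 + g ^ 2 <> 0) by (pose proof (pow2_ge_0 g); lra).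
pose proof (ic_nz g) as Hc.
destruct (Hs (n+0)%Z t) as [d0 [D0 E0]].
destruct (Hs (n+1)%Z t) as [d1 [D1 E1]].
destruct (Hs (n+2)%Z t) as [d2 [D2 E2]].
destruct (Hs (n+3)%Z t) as [d3 [D3 E3]].
assert (Q0 : Derive (fun x : R => u (n+0)%Z x) t = d0) by (apply is_derive_unique; exact D0).
assert (Q1 : Derive (fun x : R => u (n+1)%Z x) t = d1) by (apply is_derive_unique; exact D1).
assert (Q2 : Derive (fun x : R => u (n+2)%Z x) t = d2) by (apply is_derive_unique; exact D2).
assert (Q3 : Derive (fun x : R => u (n+3)%Z x) t = d3) by (apply is_derive_unique; exact D3).
apply (divc _ _ _ Hc) in E0; apply (divc _ _ _ Hc) in E1;
apply (divc _ _ _ Hc) in E2; apply (divc _ _ _ Hc) in E3.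
rewrite Fi_conv in E0, E1, E2, E3.
pose proof (NDi_conv _ _ _ (Hnd (n + -2)%Z t)) as N0.
pose proof (NDi_conv _ _ _ (Hnd (n + -1)%Z t)) as N1.
pose proof (NDi_conv _ _ _ (Hnd (n + 0)%Z t)) as N2.
pose proof (NDi_conv _ _ _ (Hnd (n + 1)%Z t)) as N3.
pose proof (NDi_conv _ _ _ (Hnd (n + 2)%Z t)) as N4.
pose proof (Hnz (n + -1)%Z t) as Z1. rewrite Gi_conv in Z1. apply Gnz_A in Z1.
pose proof (Hnz (n + 1)%Z t) as Z2. rewrite Gi_conv in Z2. apply Gnz_A in Z2.
destruct Z1 as [Z1a Z1b]. destruct Z2 as [Z2a Z2b].
exists (iC g (u (n+0)%Z t) (u (n+1)%Z t) (u (n+2)%Z t) (u (n+3)%Z t) d0 d1 d2 d3 / iD g (u (n+0)%Z t) (u (n+1)%Z t) (u (n+2)%Z t) (u (n+3)%Z t) ^ 2).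
split.
- unfold Gi, sh.
  revert N2. unfold iD, sh. normZ. intro N2.
  auto_derive.
  + repeat split; try (eexists; eassumption); try assumption.
  + rewrite Q0, Q1, Q2, Q3. unfold iC, idN, idD, iN, iA, iD. field. split; assumption.
- rewrite Rmult_1_l. cbv beta zeta delta [W_rhs sh]. rewrite !Gi_conv.
  revert E0 E1 E2 E3 N0 N1 N2 N3 N4 Z1a Z1b Z2a Z2b.
  unfold sh. normZ. intros.
  apply pureI; assumption.
Qed.



Lemma Gc_conv v n : Gc v n = cN (sh v n 0) (sh v n 1) (sh v n 2) (sh v n 3) / cD (sh v n 0) (sh v n 1) (sh v n 2) (sh v n 3).
Proof. reflexivity. Qed.
Lemma Fc_conv v n : NDc v n -> Fc v n = cF (sh v n (-2)) (sh v n (-1)) (sh v n 0) (sh v n 1) (sh v n 2).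
Proof.
unfold NDc, Fc, cF, cP, cQ, cD.
generalize (sh v n (-2)) (sh v n (-1)) (sh v n 0) (sh v n 1) (sh v n 2) (sh v n 3).
intros um2 um1 u u1 u2 u3 H. cbv zeta in H.
repeat match goal with H : _ /\ _ |- _ => destruct H end.
field. repeat split; solve_nz.
Qed.
Lemma NDc_conv v n : NDc v n -> cD (sh v n 0) (sh v n 1) (sh v n 2) (sh v n 3) <> 0.
Proof. intros H. unfold NDc in H. cbv zeta in H. repeat match goal with H : _ /\ _ |- _ => destruct H end. unfold cD. assumption. Qed.
Lemma Gnz_c a b c d : cN a b c d / cD a b c d <> 0 -> d - 2 * c + b <> 0 /\ c - 2 * b + a <> 0.
Proof. intro H. apply div_nz_l in H. unfold cN in H. split.
 - apply prod_nz_l in H. exact H.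
 - apply prod_nz_r in H. exact H. Qed.

Lemma caseC : transforms (1 / 4) Fc NDc Gc.
Proof.
intros u Hs Hnd Hnz n t.
pose proof ccc_nz as Hc.
destruct (Hs (n+0)%Z t) as [d0 [D0 E0]].
destruct (Hs (n+1)%Z t) as [d1 [D1 E1]].
destruct (Hs (n+2)%Z t) as [d2 [D2 E2]].
destruct (Hs (n+3)%Z t) as [d3 [D3 E3]].
assert (Q0 : Derive (fun x : R => u (n+0)%Z x) t = d0) by (apply is_derive_unique; exact D0).
assert (Q1 : Derive (fun x : R => u (n+1)%Z x) t = d1) by (apply is_derive_unique; exact D1).
assert (Q2 : Derive (fun x : R => u (n+2)%Z x) t = d2) by (apply is_derive_unique; exact D2).
assert (Q3 : Derive (fun x : R => u (n+3)%Z x) t = d3) by (apply is_derive_unique; exact D3).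
change (1/4) with ccc in E0, E1, E2, E3.
apply (divc _ _ _ Hc) in E0; apply (divc _ _ _ Hc) in E1;
apply (divc _ _ _ Hc) in E2; apply (divc _ _ _ Hc) in E3.
rewrite (Fc_conv _ _ (Hnd _ t)) in E0. rewrite (Fc_conv _ _ (Hnd _ t)) in E1. rewrite (Fc_conv _ _ (Hnd _ t)) in E2. rewrite (Fc_conv _ _ (Hnd _ t)) in E3.
pose proof (NDc_conv _ _ (Hnd (n + -2)%Z t)) as N0.
pose proof (NDc_conv _ _ (Hnd (n + -1)%Z t)) as N1.
pose proof (NDc_conv _ _ (Hnd (n + 0)%Z t)) as N2.
pose proof (NDc_conv _ _ (Hnd (n + 1)%Z t)) as N3.
pose proof (NDc_conv _ _ (Hnd (n + 2)%Z t)) as N4.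
pose proof (Hnz (n + -1)%Z t) as Z1. rewrite Gc_conv in Z1. apply Gnz_c in Z1.
pose proof (Hnz (n + 1)%Z t) as Z2. rewrite Gc_conv in Z2. apply Gnz_c in Z2.
destruct Z1 as [Z1a Z1b]. destruct Z2 as [Z2a Z2b].
exists (cC (u (n+0)%Z t) (u (n+1)%Z t) (u (n+2)%Z t) (u (n+3)%Z t) d0 d1 d2 d3 / cD (u (n+0)%Z t) (u (n+1)%Z t) (u (n+2)%Z t) (u (n+3)%Z t) ^ 2).
split.
- unfold Gc, sh.
  revert N2. unfold cD, sh. normZ. intro N2.
  auto_derive.
  + repeat split; try (eexists; eassumption); try assumption.
  + rewrite Q0, Q1, Q2, Q3. unfold cC, cdD, cdN, cN, cD. field. assumption.
- rewrite Rmult_1_l. cbv beta zeta delta [W_rhs sh]. rewrite !Gc_conv.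
  revert E0 E1 E2 E3 N0 N1 N2 N3 N4 Z1a Z1b Z2a Z2b.
  unfold sh. normZ. intros.
  apply pureC; assumption.
Qed.



Lemma Gd_conv v n : NDd v n -> Gd v n = dN (sh v n 0) (sh v n 1) (sh v n 2) (sh v n 3) / dD (sh v n 0) (sh v n 1) (sh v n 2) (sh v n 3).
Proof.
unfold NDd, Gd, dN, dD.
generalize (sh v n (-2)) (sh v n (-1)) (sh v n 0) (sh v n 1) (sh v n 2) (sh v n 3).
intros um2 um1 u u1 u2 u3 H. cbv zeta in H.
repeat match goal with H : _ /\ _ |- _ => destruct H end.
field. repeat split; solve_nz.
Qed.
Lemma Fd_conv v n : NDd v n -> Fd v n = dF (sh v n (-2)) (sh v n (-1)) (sh v n 0) (sh v n 1) (sh v n 2).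
Proof.
unfold NDd, Fd, dF, dP, dQ, dD.
generalize (sh v n (-2)) (sh v n (-1)) (sh v n 0) (sh v n 1) (sh v n 2) (sh v n 3).
intros um2 um1 u u1 u2 u3 H. cbv zeta in H.
repeat match goal with H : _ /\ _ |- _ => destruct H end.
field. repeat split; solve_nz.
Qed.
Lemma NDd_conv v n : NDd v n -> dD (sh v n 0) (sh v n 1) (sh v n 2) (sh v n 3) <> 0.
Proof.
unfold NDd, dD.
generalize (sh v n (-2)) (sh v n (-1)) (sh v n 0) (sh v n 1) (sh v n 2) (sh v n 3).
intros um2 um1 u u1 u2 u3 H. cbv zeta in H.
repeat match goal with H : _ /\ _ |- _ => destruct H end.
solve_nz.
Qed.
Lemma Gnz_d a b c d : dN a b c d / dD a b c d <> 0 -> d - b <> 0 /\ c - a <> 0.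
Proof. intro H. apply div_nz_l in H. unfold dN in H. apply Ropp_neq_0_compat in H. rewrite Ropp_involutive in H. split.
 - apply prod_nz_l in H. exact H.
 - apply prod_nz_r in H. exact H. Qed.

Lemma caseD : transforms 1 Fd NDd Gd.
Proof.
intros u Hs Hnd Hnz n t.
pose proof dcc_nz as Hc.
destruct (Hs (n+0)%Z t) as [d0 [D0 E0]].
destruct (Hs (n+1)%Z t) as [d1 [D1 E1]].
destruct (Hs (n+2)%Z t) as [d2 [D2 E2]].
destruct (Hs (n+3)%Z t) as [d3 [D3 E3]].
assert (Q0 : Derive (fun x : R => u (n+0)%Z x) t = d0) by (apply is_derive_unique; exact D0).
assert (Q1 : Derive (fun x : R => u (n+1)%Z x) t = d1) by (apply is_derive_unique; exact D1).
assert (Q2 : Derive (fun x : R => u (n+2)%Z x) t = d2) by (apply is_derive_unique; exact D2).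
assert (Q3 : Derive (fun x : R => u (n+3)%Z x) t = d3) by (apply is_derive_unique; exact D3).
change 1 with dcc in E0, E1, E2, E3.
apply (divc _ _ _ Hc) in E0; apply (divc _ _ _ Hc) in E1;
apply (divc _ _ _ Hc) in E2; apply (divc _ _ _ Hc) in E3.
rewrite (Fd_conv _ _ (Hnd _ t)) in E0. rewrite (Fd_conv _ _ (Hnd _ t)) in E1.
rewrite (Fd_conv _ _ (Hnd _ t)) in E2. rewrite (Fd_conv _ _ (Hnd _ t)) in E3.
pose proof (NDd_conv _ _ (Hnd (n + -2)%Z t)) as N0.
pose proof (NDd_conv _ _ (Hnd (n + -1)%Z t)) as N1.
pose proof (NDd_conv _ _ (Hnd (n + 0)%Z t)) as N2.
pose proof (NDd_conv _ _ (Hnd (n + 1)%Z t)) as N3.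
pose proof (NDd_conv _ _ (Hnd (n + 2)%Z t)) as N4.
pose proof (Hnz (n + -1)%Z t) as Z1. rewrite (Gd_conv _ _ (Hnd _ t)) in Z1. apply Gnz_d in Z1.
pose proof (Hnz (n + 1)%Z t) as Z2. rewrite (Gd_conv _ _ (Hnd _ t)) in Z2. apply Gnz_d in Z2.
destruct Z1 as [Z1a Z1b]. destruct Z2 as [Z2a Z2b].
exists (dC (u (n+0)%Z t) (u (n+1)%Z t) (u (n+2)%Z t) (u (n+3)%Z t) d0 d1 d2 d3 / dD (u (n+0)%Z t) (u (n+1)%Z t) (u (n+2)%Z t) (u (n+3)%Z t) ^ 2).
split.
- apply (is_derive_ext (fun s => dN (u (n+0)%Z s) (u (n+1)%Z s) (u (n+2)%Z s) (u (n+3)%Z s) / dD (u (n+0)%Z s) (u (n+1)%Z s) (u (n+2)%Z s) (u (n+3)%Z s))).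
  + intro s. rewrite (Gd_conv _ _ (Hnd n s)). unfold sh. normZ. reflexivity.
  + revert N2. unfold dD, dN, sh. normZ. intro N2.
    auto_derive.
    * repeat split; try (eexists; eassumption); try assumption.
    * rewrite Q0, Q1, Q2, Q3. unfold dC, ddD, ddN, dN, dD. field. assumption.
- rewrite Rmult_1_l. cbv beta zeta delta [W_rhs sh].
  rewrite !(Gd_conv _ _ (Hnd _ t)).
  revert E0 E1 E2 E3 N0 N1 N2 N3 N4 Z1a Z1b Z2a Z2b.
  unfold sh. normZ. intros.
  apply pureD; assumption.
Qed.



Lemma Ga_conv v n : NDa v n -> Ga v n = aN (sh v n 0) (sh v n 1) (sh v n 2) (sh v n 3) / aD (sh v n 0) (sh v n 1) (sh v n 2) (sh v n 3).
Proof.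
unfold NDa, Ga, aN, aD.
generalize (sh v n (-2)) (sh v n (-1)) (sh v n 0) (sh v n 1) (sh v n 2) (sh v n 3).
intros um2 um1 u u1 u2 u3 H. cbv zeta in H.
repeat match goal with H : _ /\ _ |- _ => destruct H end.
field. repeat split; solve_nz.
Qed.
Lemma Fa_conv v n : NDa v n -> Fa v n = aF (sh v n (-2)) (sh v n (-1)) (sh v n 0) (sh v n 1) (sh v n 2).
Proof.
unfold NDa, Fa, aF, aP, aQ, aD.
generalize (sh v n (-2)) (sh v n (-1)) (sh v n 0) (sh v n 1) (sh v n 2) (sh v n 3).
intros um2 um1 u u1 u2 u3 H. cbv zeta in H.
repeat match goal with H : _ /\ _ |- _ => destruct H end.
field. repeat split; solve_nz.
Qed.
Lemma NDa_conv v n : NDa v n -> aD (sh v n 0) (sh v n 1) (sh v n 2) (sh v n 3) <> 0.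
Proof.
unfold NDa, aD.
generalize (sh v n (-2)) (sh v n (-1)) (sh v n 0) (sh v n 1) (sh v n 2) (sh v n 3).
intros um2 um1 u u1 u2 u3 H. cbv zeta in H.
repeat match goal with H : _ /\ _ |- _ => destruct H end.
solve_nz.
Qed.
Lemma Gnz_a a b c d : aN a b c d / aD a b c d <> 0 -> d - b <> 0 /\ c - a <> 0.
Proof. intro H. apply div_nz_l in H. unfold aN in H. split.
 - apply prod_nz_l in H. exact H.
 - apply prod_nz_r in H. exact H. Qed.

Lemma caseA : transforms (1 / 2) Fa NDa Ga.
Proof.
intros u Hs Hnd Hnz n t.
pose proof acc_nz as Hc.
destruct (Hs (n+0)%Z t) as [d0 [D0 E0]].
destruct (Hs (n+1)%Z t) as [d1 [D1 E1]].
destruct (Hs (n+2)%Z t) as [d2 [D2 E2]].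
destruct (Hs (n+3)%Z t) as [d3 [D3 E3]].
assert (Q0 : Derive (fun x : R => u (n+0)%Z x) t = d0) by (apply is_derive_unique; exact D0).
assert (Q1 : Derive (fun x : R => u (n+1)%Z x) t = d1) by (apply is_derive_unique; exact D1).
assert (Q2 : Derive (fun x : R => u (n+2)%Z x) t = d2) by (apply is_derive_unique; exact D2).
assert (Q3 : Derive (fun x : R => u (n+3)%Z x) t = d3) by (apply is_derive_unique; exact D3).
change (1 / 2) with acc in E0, E1, E2, E3.
apply (divc _ _ _ Hc) in E0; apply (divc _ _ _ Hc) in E1;
apply (divc _ _ _ Hc) in E2; apply (divc _ _ _ Hc) in E3.
rewrite (Fa_conv _ _ (Hnd _ t)) in E0. rewrite (Fa_conv _ _ (Hnd _ t)) in E1.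
rewrite (Fa_conv _ _ (Hnd _ t)) in E2. rewrite (Fa_conv _ _ (Hnd _ t)) in E3.
pose proof (NDa_conv _ _ (Hnd (n + -2)%Z t)) as N0.
pose proof (NDa_conv _ _ (Hnd (n + -1)%Z t)) as N1.
pose proof (NDa_conv _ _ (Hnd (n + 0)%Z t)) as N2.
pose proof (NDa_conv _ _ (Hnd (n + 1)%Z t)) as N3.
pose proof (NDa_conv _ _ (Hnd (n + 2)%Z t)) as N4.
pose proof (Hnz (n + -1)%Z t) as Z1. rewrite (Ga_conv _ _ (Hnd _ t)) in Z1. apply Gnz_a in Z1.
pose proof (Hnz (n + 1)%Z t) as Z2. rewrite (Ga_conv _ _ (Hnd _ t)) in Z2. apply Gnz_a in Z2.
destruct Z1 as [Z1a Z1b]. destruct Z2 as [Z2a Z2b].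
exists (aC (u (n+0)%Z t) (u (n+1)%Z t) (u (n+2)%Z t) (u (n+3)%Z t) d0 d1 d2 d3 / aD (u (n+0)%Z t) (u (n+1)%Z t) (u (n+2)%Z t) (u (n+3)%Z t) ^ 2).
split.
- apply (is_derive_ext (fun s => aN (u (n+0)%Z s) (u (n+1)%Z s) (u (n+2)%Z s) (u (n+3)%Z s) / aD (u (n+0)%Z s) (u (n+1)%Z s) (u (n+2)%Z s) (u (n+3)%Z s))).
  + intro s. rewrite (Ga_conv _ _ (Hnd n s)). unfold sh. normZ. reflexivity.
  + revert N2. unfold aD, aN, sh. normZ. intro N2.
    auto_derive.
    * repeat split; try (eexists; eassumption); try assumption.
    * rewrite Q0, Q1, Q2, Q3. unfold aC, adD, adN, aN, aD. field. assumption.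
- rewrite Rmult_1_l. cbv beta zeta delta [W_rhs sh].
  rewrite !(Ga_conv _ _ (Hnd _ t)).
  revert E0 E1 E2 E3 N0 N1 N2 N3 N4 Z1a Z1b Z2a Z2b.
  unfold sh. normZ. intros.
  apply pureA; assumption.
Qed.


Lemma caseF : transforms 1 Ff NDf Gf.
Proof.
drive 1 Ff Gf NDf ltac:(apply R1_neq_R0).
field; repeat split; solve_nz.
Qed.

Lemma caseH : transforms 1 Fh NDh Gh.
Proof.
drive 1 Fh Gh NDh ltac:(apply R1_neq_R0).
field; repeat split; solve_nz.
Qed.

Theorem mainTheorem5 :
  transforms (1 / 2) Fa NDa Ga /\
  transforms (1 / 4) Fc NDc Gc /\
  transforms 1 Fd NDd Gd /\
  transforms 1 Ff NDf Gf /\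
  transforms 1 Fh NDh Gh /\
  (forall g : R, g <> 0 -> g ^ 2 <> -1 ->
     transforms (- (1 / (1 + g ^ 2))) (Fi g) (NDi g) (Gi g)).
Proof.
split; [exact caseA|]. split; [exact caseC|]. split; [exact caseD|].
split; [exact caseF|]. split; [exact caseH|]. exact caseI.
Qed.
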